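(* Let $\varphi$ be an automorphism of $E$ with $\varphi^2=\mathrm{id}_E$ and let $\beta=\{e_1,e_2,\ldots\}$ be a basis of $L$. Let $I=\{n\mid\varphi(e_n)=\pm e_n\}$, $I^+=\{i\in I\mid\varphi(e_i)=e_i\}$, $I^-=\{i\in I\mid\varphi(e_i)=-e_i\}$, $J=\mathbb{N}\setminus I$. (1) If $I^+$ is infinite, $I^-$ is finite with $|I^-|=k$, and $J$ is infinite, then $T_2(E_\varphi)\subseteq T_2(E_{k^\ast})$. (2) If $I^+$ is finite with $|I^+|=k$, $I^-$ is infinite and $J$ is infinite, then $T_2(E_\varphi)\subseteq T_2(E_k)$.
   Context: $F$ is a field of characteristic zero, $L$ an infinite-dimensional $F$-vector space with basis $e_1,e_2,\ldots$, $E$ its Grassmann algebra. For an automorphism $\varphi$ of $E$ of order dividing 2, $E_\varphi$ is the $\mathbb{Z}_2$-grading on $E$ by the eigenspaces of $\varphi$ for $1$ (degree 0) and $-1$ (degree 1). $E_k$ is the $\mathbb{Z}_2$-grading on $E$ where $e_1,\ldots,e_k$ have degree $0$ and all other $e_i$ degree $1$; $E_{k^\ast}$ is the grading where $e_1,\ldots,e_k$ have degree $1$ and all other $e_i$ degree $0$. $T_2(A)$ is the ideal of $\mathbb{Z}_2$-graded polynomial identities of a superalgebra $A$ in the free algebra $F\langle Y\cup Z\rangle$ ($Y$ even variables, $Z$ odd variables). *)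

(* Defs.v *)
From HB Require Import structures.
From mathcomp Require Import all_boot all_order all_algebra.
Set Implicit Arguments. Unset Strict Implicit. Unset Printing Implicit Defensive.
Import GRing.Theory.
Local Open Scope ring_scope.

(* Indices are 0-based: the paper's e_1, e_2, ... are e 0, e 1, ... *)

Definition mon (F : fieldType) (E : algType F) (e : nat -> E) (s : seq nat) : E :=
  \prod_(i <- s) e i.

Definition lincomb (F : fieldType) (E : algType F) (e : nat -> E)
  (ts : seq (F * seq nat)) : E :=
  \sum_(t <- ts) t.1 *: mon e t.2.

(** (E, e) is the Grassmann algebra of the space L with basis e_0, e_1, ...:
    the generators anticommute and the ordered monomials
    e_{i1}...e_{im} (i1 < ... < im, m >= 0) form a basis of E. *)
Definition is_grassmann_basis (F : fieldType) (E : algType F) (e : nat -> E) :=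
  [/\ forall i j, e i * e j = - (e j * e i),
      forall ts : seq (F * seq nat), all (fun t => sorted ltn t.2) ts ->
        uniq (map snd ts) -> lincomb e ts = 0 -> all (fun t => t.1 == 0) ts
    & forall x : E, exists ts : seq (F * seq nat),
        all (fun t => sorted ltn t.2) ts /\ x = lincomb e ts].

Definition in_L (F : fieldType) (E : algType F) (e : nat -> E) (x : E) :=
  exists ts : seq (F * nat), x = \sum_(t <- ts) t.1 *: e t.2.

Definition is_basis_of_L (F : fieldType) (E : algType F) (e beta : nat -> E) :=
  [/\ forall n, in_L e (beta n),
      forall ts : seq (F * nat), uniq (map snd ts) ->
        \sum_(t <- ts) t.1 *: beta t.2 = 0 -> all (fun t => t.1 == 0) ts
    & forall x, in_L e x -> exists ts : seq (F * nat),
        x = \sum_(t <- ts) t.1 *: beta t.2].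

Definition is_algebra_involution (F : fieldType) (E : algType F) (phi : E -> E) :=
  [/\ forall x y, phi (x + y) = phi x + phi y,
      forall (a : F) x, phi (a *: x) = a *: phi x,
      forall x y, phi (x * y) = phi x * phi y,
      phi 1 = 1
    & forall x, phi (phi x) = x].

Definition phi_even (F : fieldType) (E : algType F) (phi : E -> E) (x : E) :=
  phi x = x.
Definition phi_odd (F : fieldType) (E : algType F) (phi : E -> E) (x : E) :=
  phi x = - x.

(** homogeneous component of degree b of the grading of E induced by giving
    the generator e i the degree d i : the span of the ordered monomials
    whose number of odd generators has parity b. *)
Definition gen_deg_comp (F : fieldType) (E : algType F) (e : nat -> E)
  (d : nat -> bool) (b : bool) (x : E) :=
  exists ts : seq (F * seq nat),
    all (fun t => sorted ltn t.2 && (odd (count d t.2) == b)) ts /\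
    x = lincomb e ts.

(** E_k : e_1..e_k even, the others odd;  E_{k*} : e_1..e_k odd, others even *)
Definition Ek_deg (k : nat) : nat -> bool := fun i => (k <= i)%N.
Definition Ekstar_deg (k : nat) : nat -> bool := fun i => (i < k)%N.

(** Free algebra F<Y u Z>: a polynomial is a formal finite sum of
    coefficient * word; the variable (false, i) is y_i (even),
    (true, i) is z_i (odd). *)
Definition ncpoly (F : fieldType) := seq (F * seq (bool * nat)).

Definition nceval (F : fieldType) (A : algType F) (s : bool -> nat -> A)
  (f : ncpoly F) : A :=
  \sum_(t <- f) t.1 *: \prod_(v <- t.2) s v.1 v.2.

Definition graded_identity (F : fieldType) (A : algType F) (A0 A1 : A -> Prop)
  (f : ncpoly F) :=
  forall s : bool -> nat -> A,
    (forall i, A0 (s false i)) -> (forall i, A1 (s true i)) -> nceval s f = 0.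

Definition T2_sub (F : fieldType) (A B : algType F) (A0 A1 : A -> Prop)
  (B0 B1 : B -> Prop) :=
  forall f : ncpoly F, graded_identity A0 A1 f -> graded_identity B0 B1 f.

Definition infinite_nat (P : nat -> Prop) := forall m, exists n, (m <= n)%N /\ P n.
Definition has_card (P : nat -> Prop) (k : nat) :=
  exists s : seq nat, uniq s /\ size s = k /\ forall n, P n <-> n \in s.

(* Main.v *)
Require Import Defs.
From HB Require Import structures.
From mathcomp Require Import all_boot all_order all_algebra.
From Stdlib Require Import ClassicalEpsilon FunctionalExtensionality.
Set Implicit Arguments. Unset Strict Implicit. Unset Printing Implicit Defensive.
Import GRing.Theory.
Local Open Scope ring_scope.

Definition choose_or {A : Type} (d : A) (P : A -> Prop) : A :=
  match excluded_middle_informative (exists x, P x) with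
  | left H => proj1_sig (constructive_indefinite_description P H)
  | right _ => d end.

Lemma choose_orP {A : Type} (d : A) (P : A -> Prop) :
  (exists x, P x) -> P (choose_or d P).
Proof.
rewrite /choose_or; case: excluded_middle_informative => // H _.
exact: proj2_sig (constructive_indefinite_description P H).
Qed.

Lemma choose_or_cases {A : Type} (d : A) (P : A -> Prop) :
  P (choose_or d P) \/ choose_or d P = d.
Proof.
rewrite /choose_or; case: excluded_middle_informative => H; last by right.
left; exact: proj2_sig (constructive_indefinite_description P H).
Qed.

Section Gen.
Variables (F : fieldType) (E : algType F).

Definition lc (K : Type) (w : K -> E) (ts : seq (F * K)) : E :=
  \sum_(t <- ts) t.1 *: w t.2.

Lemma lc_cat K (w : K -> E) ts us : lc w (ts ++ us) = lc w ts + lc w us.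
Proof. by rewrite /lc big_cat. Qed.

Lemma lc_neg K (w : K -> E) ts : lc w (map (fun t => (- t.1, t.2)) ts) = - lc w ts.
Proof. by rewrite /lc big_map -sumrN; apply: eq_bigr => t _; rewrite scaleNr. Qed.

Lemma lc_scale K (w : K -> E) a ts : lc w (map (fun t => (a * t.1, t.2)) ts) = a *: lc w ts.
Proof. by rewrite /lc big_map scaler_sumr; apply: eq_bigr => t _; rewrite scalerA. Qed.

Lemma lc_merge (K : eqType) (w : K -> E) (ts : seq (F * K)) :
  lc w ts = lc w [seq (\sum_(t <- ts | t.2 == k) t.1, k) | k <- undup (map snd ts)].
Proof.
rewrite /lc big_map.
under [RHS]eq_bigr => k _ do rewrite scaler_suml.
rewrite (exchange_big_dep predT) //=.
rewrite big_seq_cond [RHS]big_seq_cond.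
apply: eq_bigr => t /andP [tin _].
rewrite -big_filter.
have -> : [seq i <- undup [seq i.2 | i <- ts] | t.2 == i] = [:: t.2].
  rewrite -(filter_pred1_uniq (undup_uniq [seq i.2 | i <- ts])
      (x := t.2)); last by rewrite mem_undup; apply: map_f.
  by apply: eq_filter => k /=.
by rewrite big_seq1.
Qed.


Lemma transfer (K : eqType) (w1 w2 : K -> E) (P : pred K) :
  (forall ts : seq (F * K), all (fun t => P t.2) ts -> uniq (map snd ts) ->
     lc w1 ts = 0 -> all (fun t => t.1 == 0) ts) ->
  forall ts, all (fun t => P t.2) ts -> lc w1 ts = 0 -> lc w2 ts = 0.
Proof.
move=> Hind ts Pts H0.
rewrite lc_merge in H0; rewrite lc_merge.
have := Hind _ _ _ H0.
rewrite -map_comp map_id_in // undup_uniq.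
have Pu : all (fun t => P t.2) [seq (\sum_(t <- ts | t.2 == k) t.1, k) | k <- undup (map snd ts)].
  rewrite all_map; apply/allP => k /=; rewrite mem_undup => /mapP [t tin ->].
  by move/allP: Pts => /(_ t tin).
move=> /(_ Pu isT) /allP Hz.
rewrite /lc big_seq big1 // => t /Hz /eqP ->; by rewrite scale0r.
Qed.


Definition anti (w : nat -> E) :=
  (forall i j, w i * w j = - (w j * w i)) /\ (forall i, w i * w i = 0).

Fixpoint ins (a : nat) (s : seq nat) : F * seq nat :=
  if s is b :: s' then
    if (a < b)%N then (1, a :: s) else if a == b then (0, s)
    else (- (ins a s').1, b :: (ins a s').2)
  else (1, [:: a]).

Fixpoint nsort (u : seq nat) : F * seq nat :=
  if u is a :: u' then ((nsort u').1 * (ins a (nsort u').2).1, (ins a (nsort u').2).2)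
  else (1, [::]).

Lemma mon_cons (w : nat -> E) a s : mon w (a :: s) = w a * mon w s.
Proof. by rewrite /mon big_cons. Qed.

Lemma mon_nil (w : nat -> E) : mon w [::] = 1.
Proof. by rewrite /mon big_nil. Qed.

Lemma mon_cat (w : nat -> E) s t : mon w (s ++ t) = mon w s * mon w t.
Proof. by rewrite /mon big_cat. Qed.

Lemma ins_mon (w : nat -> E) : anti w -> forall a s, w a * mon w s = (ins a s).1 *: mon w (ins a s).2.
Proof.
move=> [H1 H2] a; elim => [|b s IH] /=.
  by rewrite scale1r mon_cons.
case: ifP => ab; first by rewrite scale1r (mon_cons w a).
case: (eqVneq a b) => [<-|nab]; first by rewrite mon_cons mulrA H2 mul0r scale0r.
by rewrite !mon_cons mulrA H1 mulNr -mulrA IH -scalerAr scaleNr.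
Qed.

Lemma ins_mem a s x : x \in (ins a s).2 -> x \in a :: s.
Proof.
elim: s => [|b s IH] /=; first by [].
case: ifP => _ //; case: (eqVneq a b) => _; first by move=> xs; rewrite inE xs orbT.
rewrite inE => /orP [/eqP ->|/IH]; first by rewrite !inE eqxx orbT.
by rewrite !inE => /orP [->|->]; rewrite ?orbT.
Qed.

Lemma ins_sorted a s : sorted ltn s -> sorted ltn (ins a s).2.
Proof.
elim: s => [|b s IH] //= Hs.
case: ifP => ab; first by rewrite /= ab Hs.
case: (eqVneq a b) => nab //.
have ba : (b < a)%N by rewrite ltn_neqAle leqNgt ab andbT eq_sym nab.
rewrite /= (path_sortedE ltn_trans) IH ?(path_sorted Hs) // andbT.
move: Hs; rewrite (path_sortedE ltn_trans) => /andP [/allP Hb _].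
apply/allP => x /ins_mem; rewrite inE => /orP [/eqP ->|/Hb] //.
Qed.

Lemma nsort_mon (w : nat -> E) : anti w -> forall u, mon w u = (nsort u).1 *: mon w (nsort u).2.
Proof.
move=> Hw; elim => [|a u IH] /=; first by rewrite scale1r.
by rewrite mon_cons IH -scalerAr ins_mon // scalerA.
Qed.

Lemma nsort_sorted u : sorted ltn (nsort u).2.
Proof. elim: u => [|a u IH] //=; exact: ins_sorted. Qed.

End Gen.

Section Hom.
Variables (F : fieldType) (E : algType F) (e : nat -> E).
Hypothesis Hind : forall ts : seq (F * seq nat), all (fun t => sorted ltn t.2) ts ->
        uniq (map snd ts) -> lincomb e ts = 0 -> all (fun t => t.1 == 0) ts.
Hypothesis Hspan : forall x : E, exists ts : seq (F * seq nat),
        all (fun t => sorted ltn t.2) ts /\ x = lincomb e ts.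
Hypothesis He : anti e.
Variable g : nat -> E.
Hypothesis Hg : anti g.

Definition Hm (x : E) : E := lincomb g (choose_or [::]
  (fun ts => all (fun t => sorted ltn t.2) ts /\ x = lincomb e ts)).

Lemma Hm_rep ts : all (fun t => sorted ltn t.2) ts -> Hm (lincomb e ts) = lincomb g ts.
Proof.
move=> Sts; rewrite /Hm.
have := @choose_orP _ [::] (fun ts0 => all (fun t => sorted ltn t.2) ts0 /\ lincomb e ts = lincomb e ts0).
case/(_ (ex_intro _ ts (conj Sts erefl))).
move: (choose_or _ _) => r Sr Er.
have H0 : lc (mon g) (r ++ map (fun t => (- t.1, t.2)) ts) = 0.
  apply: (@transfer F E _ (mon e) (mon g) (fun s : seq nat => sorted ltn s)).
  - by move=> ts'; apply: Hind.
  - by rewrite all_cat Sr /= all_map.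
  - by rewrite lc_cat lc_neg; rewrite -[lc (mon e) r]/(lincomb e r) -Er subrr.
move: H0; rewrite lc_cat lc_neg => /eqP; rewrite subr_eq0 => /eqP H0.
by rewrite -[lincomb g r]/(lc (mon g) r) H0.
Qed.

Lemma lc_nsort (w : nat -> E) : anti w -> forall ts : seq (F * seq nat),
  lincomb w ts = lincomb w (map (fun t => (t.1 * (nsort F t.2).1, (nsort F t.2).2)) ts).
Proof.
move=> Hw ts; rewrite /lincomb big_map; apply: eq_bigr => t _.
rewrite /= {1}(nsort_mon Hw t.2). exact: scalerA.
Qed.

Lemma Hm_lin ts : Hm (lincomb e ts) = lincomb g ts.
Proof.
rewrite (lc_nsort He) (lc_nsort Hg) Hm_rep //.
by rewrite all_map; apply/allP => t _ /=; apply: nsort_sorted.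
Qed.

Lemma lincomb_cat (w : nat -> E) ts us : lincomb w (ts ++ us) = lincomb w ts + lincomb w us.
Proof. exact: lc_cat. Qed.

Lemma lincomb_mul (w : nat -> E) (ts us : seq (F * seq nat)) :
  lincomb w ts * lincomb w us =
  lincomb w [seq (t.1 * u.1, t.2 ++ u.2) | t <- ts, u <- us].
Proof.
rewrite /lincomb big_allpairs_dep mulr_suml; apply: eq_bigr => t _.
rewrite mulr_sumr; apply: eq_bigr => u _ /=.
by rewrite mon_cat -scalerAr !scalerAl scalerA [u.1 * _]mulrC.
Qed.

Lemma Hm_add x y : Hm (x + y) = Hm x + Hm y.
Proof.
have [rx [_ ->]] := Hspan x; have [ry [_ ->]] := Hspan y.
by rewrite -lincomb_cat !Hm_lin lincomb_cat.
Qed.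

Lemma Hm_scale a x : Hm (a *: x) = a *: Hm x.
Proof.
have [rx [_ ->]] := Hspan x.
have LS (w : nat -> E) : lincomb w [seq (a * t.1, t.2) | t <- rx] = a *: lincomb w rx.
  exact: lc_scale.
by rewrite -LS Hm_lin Hm_lin LS.
Qed.

Lemma Hm_mul x y : Hm (x * y) = Hm x * Hm y.
Proof.
have [rx [_ ->]] := Hspan x; have [ry [_ ->]] := Hspan y.
by rewrite lincomb_mul !Hm_lin lincomb_mul.
Qed.

Lemma lincomb1 (w : nat -> E) : lincomb w [:: (1, [::])] = 1.
Proof. by rewrite /lincomb big_seq1 scale1r mon_nil. Qed.

Lemma Hm_one : Hm 1 = 1.
Proof. by have := Hm_lin [:: (1, [::])]; rewrite !lincomb1. Qed.

Lemma Hm_zero : Hm 0 = 0.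
Proof. by have := Hm_lin [::]; rewrite /lincomb !big_nil. Qed.

Lemma Hm_sum (I : Type) (r : seq I) (f : I -> E) :
  Hm (\sum_(i <- r) f i) = \sum_(i <- r) Hm (f i).
Proof.
elim: r => [|i r IH]; first by rewrite !big_nil Hm_zero.
by rewrite !big_cons Hm_add IH.
Qed.

Lemma Hm_prod (I : Type) (r : seq I) (f : I -> E) :
  Hm (\prod_(i <- r) f i) = \prod_(i <- r) Hm (f i).
Proof.
elim: r => [|i r IH]; first by rewrite !big_nil Hm_one.
by rewrite !big_cons Hm_mul IH.
Qed.

Lemma Hm_e i : Hm (e i) = g i.
Proof.
have -> : e i = lincomb e [:: (1, [:: i])] by rewrite /lincomb big_seq1 scale1r /mon big_seq1.
by rewrite Hm_lin /lincomb big_seq1 scale1r /mon big_seq1.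
Qed.

End Hom.

Section Key.
Variables (F : fieldType) (E : algType F) (e : nat -> E) (phi : E -> E) (beta : nat -> E).
Hypothesis charF : [pchar F] =i pred0.
Hypothesis HE : is_grassmann_basis e.
Hypothesis Hphi : is_algebra_involution phi.
Hypothesis Hbeta : is_basis_of_L e beta.

Lemma HE1 i j : e i * e j = - (e j * e i). Proof. by case: HE. Qed.
Lemma HE2 : forall ts : seq (F * seq nat), all (fun t => sorted ltn t.2) ts ->
        uniq (map snd ts) -> lincomb e ts = 0 -> all (fun t => t.1 == 0) ts.
Proof. by case: HE. Qed.
Lemma HE3 : forall x : E, exists ts : seq (F * seq nat),
        all (fun t => sorted ltn t.2) ts /\ x = lincomb e ts.
Proof. by case: HE. Qed.

Lemma two_nz : (2%:R : F) != 0.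
Proof. by have := (pcharf0P F).1 charF 2 => ->. Qed.

Lemma sq0 (x : E) : x = - x -> x = 0.
Proof.
move/eqP; rewrite -subr_eq0 opprK -mulr2n -scaler_nat scaler_eq0.
by rewrite (negbTE two_nz) => /eqP.
Qed.

Lemma inL_lc_e ts : in_L e (lc e ts). Proof. by exists ts. Qed.

Lemma inL_e i : in_L e (e i).
Proof. by exists [:: (1, i)]; rewrite big_seq1 scale1r. Qed.

Lemma inL_add x y : in_L e x -> in_L e y -> in_L e (x + y).
Proof. by case=> [a ->] [b ->]; exists (a ++ b); rewrite big_cat. Qed.

Lemma inL_scale c x : in_L e x -> in_L e (c *: x).
Proof. by case=> [a ->]; exists [seq (c * t.1, t.2) | t <- a]; rewrite -[RHS]/(lc e _) lc_scale. Qed.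

Lemma inL_0 : in_L e 0.
Proof. by exists [::]; rewrite big_nil. Qed.

Lemma inL_lc (w : nat -> E) ts : (forall n, in_L e (w n)) -> in_L e (lc w ts).
Proof.
move=> Hw; elim: ts => [|t ts IH]; first by rewrite /lc big_nil; apply: inL_0.
by rewrite /lc big_cons; apply: inL_add => //; apply: inL_scale.
Qed.

Lemma inL_anti x y : in_L e x -> in_L e y -> x * y = - (y * x).
Proof.
case=> [ts ->] [us ->].
rewrite mulr_suml [in RHS]mulr_suml -sumrN.
under eq_bigr do rewrite mulr_sumr.
under [in RHS]eq_bigr do rewrite mulr_sumr -sumrN.
rewrite [RHS](exchange_big) /=.
apply: eq_bigr => t _; apply: eq_bigr => u _.
by rewrite -!scalerAl -!scalerAr HE1 !scalerN !scalerA mulrC.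
Qed.

Lemma inL_sq x : in_L e x -> x * x = 0.
Proof. by move=> Hx; apply: sq0; apply: inL_anti. Qed.

Lemma anti_e : anti e.
Proof. by split; [apply: HE1 | move=> i; apply: inL_sq; apply: inL_e]. Qed.

Lemma beta_rep x : in_L e x -> exists ts, x = lc beta ts.
Proof. by case: Hbeta => _ _ H /H. Qed.

Lemma beta_ind : forall ts : seq (F * nat), all (fun t => predT t.2) ts -> uniq (map snd ts) ->
        lc beta ts = 0 -> all (fun t => t.1 == 0) ts.
Proof. by case: Hbeta => _ H _ ts _; apply: H. Qed.

Variables (sigma : nat -> nat) (d : nat -> bool).
Hypothesis sinj : injective sigma.
Hypothesis sdeg : forall j, phi (beta (sigma j)) = if d j then - beta (sigma j) else beta (sigma j).

Definition h (n : nat) : E := choose_or 0 (fun v => exists j, sigma j = n /\ v = e j).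

Lemma h_sigma j : h (sigma j) = e j.
Proof.
rewrite /h; have := @choose_orP _ 0 (fun v => exists j0, sigma j0 = sigma j /\ v = e j0).
by case/(_ (ex_intro _ (e j) (ex_intro _ j (conj erefl erefl)))) => j0 [/sinj -> ->].
Qed.

Lemma h_inL n : in_L e (h n).
Proof.
rewrite /h; case: (choose_or_cases 0 (fun v => exists j, sigma j = n /\ v = e j)).
  by case=> j [_ ->]; apply: inL_e.
by move=> ->; apply: inL_0.
Qed.

Definition lam (x : E) : E := lc h (choose_or [::] (fun ts => x = lc beta ts)).

Lemma lam_rep x ts : x = lc beta ts -> lam x = lc h ts.
Proof.
move=> Ex; rewrite /lam.
have := @choose_orP _ [::] (fun ts0 => x = lc beta ts0).
case/(_ (ex_intro _ ts Ex)); move: (choose_or _ _) => r Er.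
have H0 : lc h (r ++ map (fun t => (- t.1, t.2)) ts) = 0.
  apply: (@transfer F E _ beta h predT beta_ind); first by rewrite all_predT.
  by rewrite lc_cat lc_neg -Er -Ex subrr.
by move: H0; rewrite lc_cat lc_neg => /eqP; rewrite subr_eq0 => /eqP.
Qed.

Lemma lam_inL x : in_L e (lam x).
Proof. by apply: inL_lc; apply: h_inL. Qed.

Lemma lam_add x y : in_L e x -> in_L e y -> lam (x + y) = lam x + lam y.
Proof.
move=> /beta_rep [a Ea] /beta_rep [b Eb].
by rewrite (lam_rep Ea) (lam_rep Eb) (@lam_rep _ (a ++ b)) ?lc_cat ?Ea ?Eb.
Qed.

Lemma lam_scale c x : in_L e x -> lam (c *: x) = c *: lam x.
Proof.
move=> /beta_rep [a Ea].
by rewrite (lam_rep Ea) (@lam_rep _ [seq (c * t.1, t.2) | t <- a]) ?lc_scale ?Ea.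
Qed.

Lemma lam_0 : lam 0 = 0.
Proof. by rewrite (@lam_rep _ [::]) /lc big_nil. Qed.

Lemma lam_lc ts : lam (lc e ts) = lc (fun i => lam (e i)) ts.
Proof.
elim: ts => [|t ts IH]; first by rewrite /lc !big_nil lam_0.
rewrite /lc !big_cons lam_add ?lam_scale -/(lc e ts) ?IH //; first exact: inL_e.
  by apply: inL_scale; apply: inL_e.
exact: inL_lc_e.
Qed.

Definition g (i : nat) : E := lam (e i).

Lemma anti_g : anti g.
Proof.
split; first by move=> i j; apply: inL_anti; apply: lam_inL.
by move=> i; apply: inL_sq; apply: lam_inL.
Qed.

Definition chi := Hm e g.

Ltac hmt := first [exact: HE2 | exact: HE3 | exact: anti_e | exact: anti_g].

Lemma chi_lin ts : chi (lincomb e ts) = lincomb g ts.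
Proof. by apply: Hm_lin; hmt. Qed.
Lemma chi_add x y : chi (x + y) = chi x + chi y.
Proof. by apply: Hm_add; hmt. Qed.
Lemma chi_scale a x : chi (a *: x) = a *: chi x.
Proof. by apply: Hm_scale; hmt. Qed.
Lemma chi_zero : chi 0 = 0.
Proof. by apply: Hm_zero; hmt. Qed.
Lemma chi_sum (I : Type) (r : seq I) (f : I -> E) :
  chi (\sum_(i <- r) f i) = \sum_(i <- r) chi (f i).
Proof. by apply: Hm_sum; hmt. Qed.
Lemma chi_prod (I : Type) (r : seq I) (f : I -> E) :
  chi (\prod_(i <- r) f i) = \prod_(i <- r) chi (f i).
Proof. by apply: Hm_prod; hmt. Qed.

Lemma lc_lincomb (w : nat -> E) (ts : seq (F * nat)) :
  lc w ts = lincomb w (map (fun t => (t.1, [:: t.2])) ts).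
Proof. by rewrite /lincomb big_map; apply: eq_bigr => t _; rewrite /mon big_seq1. Qed.

Lemma chi_beta j : chi (beta (sigma j)) = e j.
Proof.
case: Hbeta => /(_ (sigma j)) [ts Ets] _ _.
rewrite Ets -[\sum_(t <- ts) _]/(lc e ts) lc_lincomb chi_lin.
rewrite -lc_lincomb /g -lam_lc.
rewrite -[lc e ts]/(\sum_(t <- ts) t.1 *: e t.2) -Ets.
rewrite (@lam_rep _ [:: (1, sigma j)]); first by rewrite /lc big_seq1 scale1r h_sigma.
by rewrite /lc big_seq1 scale1r.
Qed.


Lemma phi_add x y : phi (x + y) = phi x + phi y. Proof. by case: Hphi. Qed.
Lemma phi_scale (a : F) x : phi (a *: x) = a *: phi x. Proof. by case: Hphi. Qed.
Lemma phi_mul x y : phi (x * y) = phi x * phi y. Proof. by case: Hphi. Qed.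
Lemma phi_one : phi 1 = 1. Proof. by case: Hphi. Qed.
Lemma phi_zero : phi 0 = 0.
Proof. by have := phi_scale 0 0; rewrite !scale0r. Qed.

Lemma phi_sum (I : Type) (r : seq I) (f : I -> E) :
  phi (\sum_(i <- r) f i) = \sum_(i <- r) phi (f i).
Proof.
elim: r => [|i r IH]; first by rewrite !big_nil phi_zero.
by rewrite !big_cons phi_add IH.
Qed.

Definition bs (j : nat) : E := beta (sigma j).

Lemma phi_mon t : phi (mon bs t) = if odd (count d t) then - mon bs t else mon bs t.
Proof.
elim: t => [|a t IH]; first by rewrite mon_nil phi_one.
rewrite mon_cons phi_mul IH /bs sdeg /= oddD.
by case: (d a); case: (odd (count d t)); rewrite /= ?mulNr ?mulrN ?opprK.
Qed.

Lemma phi_lincomb ts b : all (fun t => odd (count d t.2) == b) ts ->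
  phi (lincomb bs ts) = if b then - lincomb bs ts else lincomb bs ts.
Proof.
move=> /allP Hts; rewrite /lincomb phi_sum.
have -> : \sum_(t <- ts) phi (t.1 *: mon bs t.2) =
          \sum_(t <- ts) (if b then - (t.1 *: mon bs t.2) else t.1 *: mon bs t.2).
  rewrite big_seq [RHS]big_seq; apply: eq_bigr => t /Hts /eqP <-.
  by rewrite phi_scale phi_mon; case: ifP; rewrite ?scalerN.
by clear Hts; case: b; rewrite ?sumrN.
Qed.

Lemma chi_lincomb_bs ts : chi (lincomb bs ts) = lincomb e ts.
Proof.
rewrite /lincomb chi_sum; apply: eq_bigr => t _.
rewrite chi_scale /mon chi_prod; congr (_ *: _); apply: eq_bigr => j _.
exact: chi_beta.
Qed.

Lemma chi_nceval (s : bool -> nat -> E) (f : ncpoly F) :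
  chi (nceval s f) = nceval (fun b i => chi (s b i)) f.
Proof.
rewrite /nceval chi_sum; apply: eq_bigr => t _.
by rewrite chi_scale chi_prod.
Qed.

Lemma key : T2_sub (phi_even phi) (phi_odd phi)
  (gen_deg_comp e d false) (gen_deg_comp e d true).
Proof.
move=> f Hf s s0 s1.
pose P b i := fun ts : seq (F * seq nat) =>
  all (fun t => sorted ltn t.2 && (odd (count d t.2) == b)) ts /\ s b i = lincomb e ts.
pose lift b i := lincomb bs (choose_or [::] (P b i)).
have HP b i : P b i (choose_or [::] (P b i)).
  by apply: choose_orP; case: b; [exact: s1 | exact: s0].
have Hall b i : all (fun t => odd (count d t.2) == b) (choose_or [::] (P b i)).
  case: (HP b i) => /allP H _; apply/allP => t /H /andP [].
  by [].
have Hl0 i : phi_even phi (lift false i) by rewrite /phi_even /lift (phi_lincomb (Hall false i)).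
have Hl1 i : phi_odd phi (lift true i) by rewrite /phi_odd /lift (phi_lincomb (Hall true i)).
have H0 := Hf lift Hl0 Hl1.
have -> : s = fun b i => chi (lift b i).
  apply: functional_extensionality => b; apply: functional_extensionality => i.
  by rewrite /lift chi_lincomb_bs; case: (HP b i).
by rewrite -chi_nceval H0 chi_zero.
Qed.

End Key.

Fixpoint iterp (f : nat -> nat) (k : nat) : nat :=
  if k is k'.+1 then f (iterp f k').+1 else f 0.

Lemma build_sigma (A B : nat -> Prop) (s : seq nat) :
  uniq s -> (forall n, A n <-> n \in s) -> infinite_nat B ->
  (forall n, A n -> B n -> False) ->
  exists sigma : nat -> nat, injective sigma /\
    (forall j, (j < size s)%N -> A (sigma j)) /\ (forall j, (size s <= j)%N -> B (sigma j)).
Proof.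
move=> us HA HB disj.
pose pk m := choose_or 0%N (fun n => (m <= n)%N /\ B n).
have Hpk m : (m <= pk m)%N /\ B (pk m) by exact: (@choose_orP _ 0%N (fun n => (m <= n)%N /\ B n) (HB m)).
pose p := iterp pk.
have pB k : B (p k) by case: k => [|k]; [exact: (Hpk 0%N).2 | exact: (Hpk _).2].
have pS k : (p k < p k.+1)%N by exact: (Hpk (iterp pk k).+1).1.
have pinc i j : (i < j)%N -> (p i < p j)%N.
  elim: j => [|j IH] //; rewrite ltnS leq_eqVlt => /orP [/eqP ->|/IH H] //.
  exact: ltn_trans H (pS j).
have pinj : injective p.
  move=> i j Eij; case: (ltngtP i j) => // /pinc; by rewrite Eij ltnn.
exists (fun j => if (j < size s)%N then nth 0%N s j else p (j - size s)%N).
split; last split.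
- move=> i j /=; case: ifP => hi; case: ifP => hj.
  + by move/eqP; rewrite nth_uniq // => /eqP.
  + by move=> E'; exfalso; apply: (disj (nth 0%N s i)); [apply/HA; apply: mem_nth | rewrite E'; apply: pB].
  + by move=> E'; exfalso; apply: (disj (nth 0%N s j)); [apply/HA; apply: mem_nth | rewrite -E'; apply: pB].
  + move/pinj => E'.
    have hi' : (size s <= i)%N by rewrite leqNgt hi.
    have hj' : (size s <= j)%N by rewrite leqNgt hj.
    by rewrite -(subnK hi') -(subnK hj') E'.
- by move=> j hj; rewrite hj; apply/HA; apply: mem_nth.
- by move=> j hj; rewrite ltnNge hj /=; apply: pB.
Qed.

Lemma disj_pm (F : fieldType) (E : algType F) (e : nat -> E) (phi : E -> E) (beta : nat -> E)
  (charF : [pchar F] =i pred0) (Hbeta : is_basis_of_L e beta) n :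
  phi (beta n) = beta n -> phi (beta n) = - beta n -> False.
Proof.
move=> H1 H2.
have B0 : beta n = 0 by apply: (sq0 charF); exact: (etrans (esym H1) H2).
have := @beta_ind F E e beta Hbeta [:: (1, n)] isT isT.
by rewrite /lc big_seq1 B0 scaler0 /= oner_eq0 => /(_ erefl).
Qed.

Theorem mainTheorem5 (F : fieldType) (E : algType F) (e : nat -> E)
  (phi : E -> E) (beta : nat -> E)
  (charF : [pchar F] =i pred0)
  (HE : is_grassmann_basis e)
  (Hphi : is_algebra_involution phi)
  (Hbeta : is_basis_of_L e beta) :
  (forall k : nat,
     infinite_nat (fun n => phi (beta n) = beta n) ->
     has_card (fun n => phi (beta n) = - beta n) k ->
     infinite_nat (fun n => ~ (phi (beta n) = beta n \/ phi (beta n) = - beta n)) ->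
     T2_sub (phi_even phi) (phi_odd phi)
            (gen_deg_comp e (Ekstar_deg k) false) (gen_deg_comp e (Ekstar_deg k) true))
  /\
  (forall k : nat,
     has_card (fun n => phi (beta n) = beta n) k ->
     infinite_nat (fun n => phi (beta n) = - beta n) ->
     infinite_nat (fun n => ~ (phi (beta n) = beta n \/ phi (beta n) = - beta n)) ->
     T2_sub (phi_even phi) (phi_odd phi)
            (gen_deg_comp e (Ek_deg k) false) (gen_deg_comp e (Ek_deg k) true)).
Proof.
split=> k.
- move=> Hp [s [us [sz HA]]] _.
  have [sigma [sinj [SA SB]]] := build_sigma us HA Hp
    (fun n Hm Hp' => disj_pm charF Hbeta Hp' Hm).
  apply: (key charF HE Hphi Hbeta sinj) => j.
  rewrite /Ekstar_deg; case: ltnP => hj.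
  + by apply: SA; rewrite sz.
  + by apply: SB; rewrite sz.
- move=> [s [us [sz HA]]] Hm _.
  have [sigma [sinj [SA SB]]] := build_sigma us HA Hm
    (fun n Hp Hm' => disj_pm charF Hbeta Hp Hm').
  apply: (key charF HE Hphi Hbeta sinj) => j.
  rewrite /Ek_deg; case: leqP => hj.
  + by apply: SB; rewrite sz.
  + by apply: SA; rewrite sz.
Qed.
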